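(* Let $f(z)=\prod_{j=1}^\infty(1+z/b_j)$, $z\in\mathbb{C}$, where $(b_j)_{j\ge1}$ is an increasing sequence of positive numbers with $\sum_{j\ge1}1/b_j<+\infty$, and assume $f$ has order $\rho\in(0,1)$. Let $F(s)=\ln f(e^s)=\sum_{j\ge1}\ln(1+e^s/b_j)$, $s\in\mathbb{R}$. Then $$\liminf_{s\to+\infty}\frac{|F^{(k)}(s)|}{F''(s)^{k/2}}=0\quad\text{for every integer }k\ge3.$$
   Context: The order of an entire function $f$ is $\limsup_{r\to\infty}\frac{\ln\ln\max_{|z|=r}|f(z)|}{\ln r}$. $F^{(k)}$ denotes the $k$-th derivative. *)

(* Defs.v *)
From Stdlib Require Import Reals.
From Coquelicot Require Import Coquelicot.
Open Scope R_scope.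

(* Partial products  prod_{j < n} (1 + z / b_j)  (sequence indexed from 0). *)
Fixpoint prod_part (b : nat -> R) (z : C) (n : nat) : C :=
  match n with
  | O => RtoC 1
  | S m => Cmult (prod_part b z m) (Cplus (RtoC 1) (Cdiv z (RtoC (b m))))
  end.

Definition inf_prod (b : nat -> R) (z : C) : C :=
  (real (Lim_seq (fun n => Re (prod_part b z n))), real (Lim_seq (fun n => Im (prod_part b z n)))).

Definition max_modulus (f : C -> C) (r : R) : R :=
  real (Lub_Rbar (fun y => exists z : C, Cmod z = r /\ y = Cmod (f z))).

Definition limsup_pinfty_eq (g : R -> R) (l : R) : Prop :=
  (forall eps, 0 < eps -> exists R0, forall r, R0 < r -> g r < l + eps) /\
  (forall eps, 0 < eps -> forall R0, exists r, R0 < r /\ l - eps < g r).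

Definition liminf_pinfty_eq (g : R -> R) (l : R) : Prop :=
  (forall eps, 0 < eps -> exists S0, forall s, S0 < s -> l - eps < g s) /\
  (forall eps, 0 < eps -> forall S0, exists s, S0 < s /\ g s < l + eps).

Definition order_eq (f : C -> C) (rho : R) : Prop :=
  limsup_pinfty_eq (fun r => ln (ln (max_modulus f r)) / ln r) rho.

(* Main.v *)
Require Import Defs.
From Stdlib Require Import Reals Lra Lia Psatz List Classical.
From Coquelicot Require Import Coquelicot.
Open Scope R_scope.


Lemma der_plus (f g : R -> R) x df dg : is_derive f x df -> is_derive g x dg -> is_derive (fun y => f y + g y) x (df + dg).
Proof. intros; apply (is_derive_plus f g); auto. Qed.
Lemma der_minus (f g : R -> R) x df dg : is_derive f x df -> is_derive g x dg -> is_derive (fun y => f y - g y) x (df - dg).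
Proof. intros; apply (is_derive_minus f g); auto. Qed.
Lemma der_mult (f g : R -> R) x df dg : is_derive f x df -> is_derive g x dg -> is_derive (fun y => f y * g y) x (df * g x + f x * dg).
Proof. intros; apply (is_derive_mult f g); auto. intros; apply Rmult_comm. Qed.
Lemma der_const (c x : R) : is_derive (fun _ => c) x 0.
Proof. apply (is_derive_const c). Qed.
Lemma der_id (x : R) : is_derive (fun y => y) x 1.
Proof. apply (is_derive_id (K:=R_AbsRing)). Qed.

Fixpoint peval (p : list R) (x : R) : R :=
  match p with nil => 0 | c :: p' => c + x * peval p' x end.
Fixpoint padd (p q : list R) : list R :=
  match p, q with
  | nil, _ => q
  | _, nil => p
  | a :: p', b :: q' => (a + b) :: padd p' q'
  end.
Definition pscale (c : R) (p : list R) := map (Rmult c) p.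
Fixpoint pderiv (p : list R) : list R :=
  match p with nil => nil | c :: p' => padd p' (0 :: pderiv p') end.
Fixpoint psum (p : list R) : R :=
  match p with nil => 0 | c :: p' => Rabs c + psum p' end.

Lemma padd_eval p q x : peval (padd p q) x = peval p x + peval q x.
Proof.
  revert q; induction p as [|a p IH]; intros q; simpl. lra.
  destruct q as [|b q]; simpl. lra. rewrite IH. ring.
Qed.
Lemma pscale_eval c p x : peval (pscale c p) x = c * peval p x.
Proof. induction p as [|a p IH]; simpl. ring. rewrite IH; ring. Qed.

Lemma pderiv_eval p x : is_derive (peval p) x (peval (pderiv p) x).
Proof.
  induction p as [|a p IH]; simpl.
  - apply (is_derive_const 0).
  - rewrite padd_eval. simpl.
    apply (is_derive_ext (fun y => a + y * peval p y)). { intros; reflexivity. }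
    replace (peval p x + (0 + x * peval (pderiv p) x)) with (0 + (1 * peval p x + x * peval (pderiv p) x)) by ring.
    apply der_plus. apply der_const.
    apply der_mult. apply der_id. exact IH.
Qed.

Lemma psum_bound p x : 0 <= x <= 1 -> Rabs (peval p x) <= psum p.
Proof.
  intros Hx; induction p as [|a p IH]; simpl. rewrite Rabs_R0; lra.
  eapply Rle_trans. apply Rabs_triang. apply Rplus_le_compat_l.
  rewrite Rabs_mult. rewrite (Rabs_pos_eq x) by lra.
  assert (0 <= Rabs (peval p x)) by apply Rabs_pos. nra.
Qed.

Definition qnext (p : list R) : list R :=
  padd (padd p (pscale (-2) (0 :: p)))
       (padd (0 :: pderiv p) (pscale (-1) (0 :: 0 :: pderiv p))).
Lemma qnext_eval p x : peval (qnext p) x = (1 - 2 * x) * peval p x + x * (1 - x) * peval (pderiv p) x.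
Proof. unfold qnext. rewrite !padd_eval, !pscale_eval. simpl. ring. Qed.

Fixpoint qq (m : nat) : list R := match m with O => 1 :: nil | S m => qnext (qq m) end.

Definition sig (t : R) := exp t / (1 + exp t).
Lemma sig_bounds t : 0 < sig t < 1.
Proof. unfold sig. pose proof (exp_pos t). split.
  apply Rdiv_lt_0_compat; lra. apply Rmult_lt_reg_r with (1 + exp t). lra.
  unfold Rdiv; rewrite Rmult_assoc, Rinv_l by lra. lra. Qed.

Lemma sig_derive t : is_derive sig t (sig t * (1 - sig t)).
Proof.
  unfold sig. pose proof (exp_pos t).
  auto_derive. lra. field. lra.
Qed.

Definition D (m : nat) (t : R) : R :=
  match m with
  | O => ln (1 + exp t)
  | S O => sig t
  | S (S m') => sig t * (1 - sig t) * peval (qq m') (sig t)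
  end.

Lemma D_derive m t : is_derive (D m) t (D (S m) t).
Proof.
  destruct m as [|[|m]]; simpl.
  - apply (is_derive_ext (fun t => ln (1 + exp t))). intros; reflexivity.
    pose proof (exp_pos t). unfold sig. auto_derive. lra. field. lra.
  - apply (is_derive_ext sig). intros; reflexivity.
    replace (sig t * (1 - sig t) * 1) with (sig t * (1 - sig t)) by ring.
    replace (sig t * (1 - sig t) * (1 + sig t * 0)) with (sig t * (1 - sig t)) by ring.
    apply sig_derive.
  - apply (is_derive_ext (fun t => sig t * (1 - sig t) * peval (qq m) (sig t))). intros; reflexivity.
    rewrite qnext_eval.
    set (s := sig t).
    pose proof (sig_derive t) as Hs.
    pose proof (pderiv_eval (qq m) (sig t)) as Hp.
    assert (H1 : is_derive (fun y => sig y * (1 - sig y)) t (s * (1 - s) * (1 - 2 * s))).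
    { replace (s * (1 - s) * (1 - 2 * s)) with ((s * (1 - s)) * (1 - s) + s * (0 - s * (1 - s))) by ring.
      apply (der_mult sig (fun y => 1 - sig y)). exact Hs. apply (der_minus (fun _ => 1) sig). apply der_const. exact Hs. }
    assert (H2 : is_derive (fun y => peval (qq m) (sig y)) t ((s * (1 - s)) * peval (pderiv (qq m)) s)).
    { apply (is_derive_comp (peval (qq m)) sig t). exact Hp. exact Hs. }
    replace (s * (1 - s) * ((1 - 2 * s) * peval (qq m) s + s * (1 - s) * peval (pderiv (qq m)) s))
      with ((s * (1 - s) * (1 - 2 * s)) * peval (qq m) s + (s * (1 - s)) * ((s * (1 - s)) * peval (pderiv (qq m)) s)) by ring.
    apply (der_mult (fun y => sig y * (1 - sig y)) (fun y => peval (qq m) (sig y))). exact H1. exact H2.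
Qed.

Lemma psum_pos p : 0 <= psum p.
Proof. induction p; simpl. lra. pose proof (Rabs_pos a). lra. Qed.

Lemma D2_eq t : D 2 t = sig t * (1 - sig t).
Proof. simpl. ring. Qed.

Lemma D2_pos t : 0 < D 2 t.
Proof. rewrite D2_eq. pose proof (sig_bounds t). nra. Qed.

Lemma sig_le_exp t : sig t <= exp t.
Proof. unfold sig. pose proof (exp_pos t).
  apply Rmult_le_reg_r with (1 + exp t). lra.
  unfold Rdiv; rewrite Rmult_assoc, Rinv_l by lra. nra. Qed.

Lemma D_high_bound m t : Rabs (D (S (S m)) t) <= psum (qq m) * D 2 t.
Proof.
  rewrite D2_eq. change (D (S (S m)) t) with (sig t * (1 - sig t) * peval (qq m) (sig t)).
  pose proof (sig_bounds t). rewrite Rabs_mult.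
  rewrite (Rabs_pos_eq (sig t * (1 - sig t))) by nra.
  assert (Hx : 0 <= sig t <= 1) by (split; lra).
  pose proof (psum_bound (qq m) (sig t) Hx). rewrite (Rmult_comm (psum _)).
  apply Rmult_le_compat_l; auto. nra.
Qed.

Definition K (m : nat) : R := match m with O => 1 | S O => 1 | S (S m) => psum (qq m) end.
Lemma K_pos m : 0 <= K m.
Proof. destruct m as [|[|m]]; simpl; try lra. apply psum_pos. Qed.

Lemma ln1p_le x : 0 < x -> 0 < ln (1 + x) <= x.
Proof. intros Hx. split.
  - rewrite <- ln_1. apply ln_increasing; lra.
  - pose proof (exp_ineq1 x ltac:(lra)). rewrite <- (ln_exp x) at 2.
    apply Rlt_le, ln_increasing; lra. Qed.

Lemma D_bound_exp m t : Rabs (D m t) <= K m * exp t.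
Proof.
  pose proof (exp_pos t). pose proof (sig_bounds t). pose proof (sig_le_exp t).
  destruct m as [|[|m]]; simpl K.
  - simpl. destruct (ln1p_le (exp t) H). rewrite Rabs_pos_eq; lra.
  - simpl. rewrite Rabs_pos_eq; lra.
  - eapply Rle_trans. apply D_high_bound. rewrite D2_eq.
    pose proof (psum_pos (qq m)). apply Rmult_le_compat_l. lra. nra.
Qed.

Definition a (b : nat -> R) (j : nat) := ln (b j).
Definition G (b : nat -> R) (m : nat) (s : R) := Series (fun j => D m (s - a b j)).

Lemma exp_sub_a b j s : 0 < b j -> exp (s - a b j) = exp s * / b j.
Proof. intros H. unfold a, Rminus. rewrite exp_plus, exp_Ropp, exp_ln; auto. Qed.

Section Ser.
Variable b : nat -> R.
Hypothesis hb_pos : forall j, 0 < b j.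
Hypothesis hb_sum : ex_series (fun j => / b j).

Lemma term_bound m s c j : s <= c -> Rabs (D m (s - a b j)) <= K m * exp c * / b j.
Proof.
  intros Hsc. eapply Rle_trans. apply D_bound_exp. rewrite exp_sub_a by auto.
  rewrite Rmult_assoc. apply Rmult_le_compat_l. apply K_pos.
  apply Rmult_le_compat_r. pose proof (hb_pos j). left; apply Rinv_0_lt_compat; auto.
  destruct (Req_dec s c). subst; lra. left; apply exp_increasing; lra.
Qed.

Lemma ex_bound_series C : ex_series (fun j => C * / b j).
Proof. apply (ex_series_scal_l C (fun j => / b j)). exact hb_sum. Qed.

Lemma ex_G_abs m s : ex_series (fun j => Rabs (D m (s - a b j))).
Proof.
  apply (ex_series_le (fun j => Rabs (D m (s - a b j))) (fun j => K m * exp s * / b j)).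
  intros n. change (norm (Rabs (D m (s - a b n)))) with (Rabs (Rabs (D m (s - a b n)))).
  rewrite Rabs_Rabsolu. apply term_bound. lra.
  apply ex_bound_series.
Qed.

Lemma ex_G m s : ex_series (fun j => D m (s - a b j)).
Proof. apply ex_series_Rabs. apply ex_G_abs. Qed.

Definition tail (n : nat) := Series (fun k => / b (S n + k)).

Lemma tail_small eps : 0 < eps -> exists N, forall n, (N <= n)%nat -> tail n < eps.
Proof.
  intros He. pose proof (Series_correct _ hb_sum) as Hs.
  apply is_series_Reals in Hs. destruct (Hs eps He) as [N HN].
  exists N. intros n Hn. unfold tail.
  pose proof (Series_incr_n (fun j => / b j) (S n) ltac:(lia) hb_sum) as E.
  simpl pred in E. specialize (HN n Hn). unfold Rdist in HN.
  apply Rabs_def2 in HN. lra.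
Qed.

Lemma G_tail m c y n : y <= c ->
  Rabs (G b m y - sum_f_R0 (fun j => D m (y - a b j)) n) <= K m * exp c * tail n.
Proof.
  intros Hy. unfold G.
  rewrite (Series_incr_n (fun j => D m (y - a b j)) (S n) ltac:(lia) (ex_G m y)). simpl pred.
  replace (sum_f_R0 (fun j => D m (y - a b j)) n + Series (fun k => D m (y - a b (S n + k))) -
    sum_f_R0 (fun j => D m (y - a b j)) n) with (Series (fun k => D m (y - a b (S n + k)))) by ring.
  eapply Rle_trans. apply Series_Rabs.
  apply (proj1 (ex_series_incr_n (fun j => Rabs (D m (y - a b j))) (S n))). apply ex_G_abs.
  unfold tail. rewrite <- Series_scal_l.
  apply Series_le. intros k. split. apply Rabs_pos. apply term_bound. auto.
  apply (ex_series_scal_l (K m * exp c) (fun k => / b (S n + k))).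
  apply (proj1 (ex_series_incr_n (fun j => / b j) (S n))). exact hb_sum.
Qed.

Lemma partial_derive m n y :
  derivable_pt_lim (fun y => sum_f_R0 (fun j => D m (y - a b j)) n) y
                   (sum_f_R0 (fun j => D (S m) (y - a b j)) n).
Proof.
  apply is_derive_Reals.
  assert (Hj : forall j, is_derive (fun y => D m (y - a b j)) y (D (S m) (y - a b j))).
  { intros j. replace (D (S m) (y - a b j)) with (scal 1 (D (S m) (y - a b j))).
    apply (is_derive_comp (D m) (fun y => y - a b j)). apply D_derive.
    replace 1 with (1 - 0) by ring. apply (der_minus (fun y => y) (fun _ => a b j)). apply der_id. apply der_const.
    apply Rmult_1_l. }
  induction n as [|n IH]; simpl.
  - apply Hj.
  - apply (der_plus (fun y => sum_f_R0 (fun j => D m (y - a b j)) n) (fun y => D m (y - a b (S n)))).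
    exact IH. apply Hj.
Qed.

Lemma G_derive m x : is_derive (G b m) x (G b (S m) x).
Proof.
  apply is_derive_Reals.
  set (r := mkposreal 1 Rlt_0_1).
  apply (CVU_derivable (fun n y => sum_f_R0 (fun j => D m (y - a b j)) n)
                       (fun n y => sum_f_R0 (fun j => D (S m) (y - a b j)) n)
                       (G b m) (G b (S m)) x r).
  - intros eps He.
    set (C := K (S m) * exp (x + 1) + 1).
    assert (HC : 0 < C). { unfold C. pose proof (K_pos (S m)). pose proof (exp_pos (x+1)). nra. }
    destruct (tail_small (eps / C)) as [N HN]. apply Rdiv_lt_0_compat; lra.
    exists N. intros n y Hn Hy. unfold Boule in Hy. simpl in Hy.
    apply Rabs_def2 in Hy.
    eapply Rle_lt_trans. apply (G_tail (S m) (x + 1)). lra.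
    assert (Ht : tail n < eps / C) by (apply HN; lia).
    pose proof (K_pos (S m)). pose proof (exp_pos (x+1)).
    assert (Ht2 : tail n * C < eps). { apply (Rmult_lt_compat_r C) in Ht; auto. unfold Rdiv in Ht. rewrite Rmult_assoc, Rinv_l in Ht; lra. }
    assert (0 <= tail n).
    { unfold tail. replace 0 with (Series (fun _ => 0)). apply Series_le. intros; split. lra. left; apply Rinv_0_lt_compat, hb_pos.
      apply (proj1 (ex_series_incr_n (fun j => / b j) (S n))). exact hb_sum.
      transitivity (Series (fun n:nat => 0 * 1)). apply Series_ext; intros; ring. rewrite Series_scal_l; ring. }
    unfold C in Ht2. nra.
  - intros y _. pose proof (Series_correct _ (ex_G m y)) as Hs. apply is_series_Reals in Hs. exact Hs.
  - intros n y _. apply partial_derive.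
  - unfold Boule. simpl. rewrite Rminus_diag, Rabs_R0. lra.
Qed.
End Ser.

Section Main1.
Variable b : nat -> R.
Hypothesis hb_pos : forall j, 0 < b j.
Hypothesis hb_sum : ex_series (fun j => / b j).

Lemma Derive_n_G k s :
  Derive_n (fun s => Series (fun j => ln (1 + exp s / b j))) k s = G b k s.
Proof.
  revert s; induction k as [|k IH]; intros s; simpl.
  - unfold G. apply Series_ext. intros j. simpl. rewrite exp_sub_a by auto. reflexivity.
  - rewrite (Derive_ext _ (G b k) s IH). apply is_derive_unique. apply G_derive; auto.
Qed.

Lemma Series_nonneg (f : nat -> R) : (forall n, 0 <= f n) -> ex_series f -> 0 <= Series f.
Proof.
  intros Hf Hex. replace 0 with (Series (fun _ => 0)). apply Series_le. intros; split; [lra|auto]. auto.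
  transitivity (Series (fun n:nat => 0 * 1)). apply Series_ext; intros; ring. rewrite Series_scal_l; ring.
Qed.

Lemma G_high_bound m s : Rabs (G b (S (S m)) s) <= psum (qq m) * G b 2 s.
Proof.
  unfold G. eapply Rle_trans. apply Series_Rabs. apply ex_G_abs; auto.
  rewrite <- Series_scal_l. apply Series_le. intros n; split. apply Rabs_pos. apply D_high_bound.
  apply (ex_series_scal_l (psum (qq m)) (fun j => D 2 (s - a b j))). apply ex_G; auto.
Qed.

Lemma G_cont m x : continuity_pt (G b m) x.
Proof.
  apply continuity_pt_filterlim. apply (ex_derive_continuous (K:=R_AbsRing) (V:=R_NormedModule)). eexists. apply G_derive; auto.
Qed.
End Main1.

Lemma abs_bounds x e : Rabs x <= e -> -e <= x <= e.
Proof. unfold Rabs; destruct Rcase_abs; lra. Qed.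

Lemma Lim_seq_abs_bound (u : nat -> R) E : (forall n, Rabs (u n) <= E) -> Rabs (real (Lim_seq u)) <= E.
Proof.
  intros H.
  assert (H1 : Rbar_le (Lim_seq u) (Lim_seq (fun _ => E))).
  { apply Lim_seq_le_loc. exists 0%nat. intros n _. specialize (H n). apply abs_bounds in H. lra. }
  assert (H2 : Rbar_le (Lim_seq (fun _ => - E)) (Lim_seq u)).
  { apply Lim_seq_le_loc. exists 0%nat. intros n _. specialize (H n). apply abs_bounds in H. lra. }
  rewrite Lim_seq_const in H1, H2.
  destruct (Lim_seq u) as [l| |]; simpl in *; try contradiction.
  apply Rabs_le; lra.
Qed.

Lemma Cmod_le_sum (z : C) : Cmod z <= Rabs (Re z) + Rabs (Im z).
Proof.
  unfold Cmod. rewrite <- (sqrt_pow2 (Rabs (Re z) + Rabs (Im z))).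
  apply sqrt_le_1_alt. unfold Re, Im.
  pose proof (Rabs_pos (fst z)). pose proof (Rabs_pos (snd z)).
  replace (fst z ^ 2) with (Rabs (fst z) ^ 2). replace (snd z ^ 2) with (Rabs (snd z) ^ 2). nra.
  simpl. rewrite !Rmult_1_r. rewrite <- Rabs_mult. apply Rabs_pos_eq. nra.
  simpl. rewrite !Rmult_1_r. rewrite <- Rabs_mult. apply Rabs_pos_eq. nra.
  pose proof (Rabs_pos (Re z)). pose proof (Rabs_pos (Im z)). lra.
Qed.

Lemma Cmod_factor (z : C) bj : 0 < bj -> Cmod (Cplus (RtoC 1) (Cdiv z (RtoC bj))) <= 1 + Cmod z / bj.
Proof.
  intros Hb. eapply Rle_trans. apply Cmod_triangle.
  rewrite Cmod_1. rewrite Cmod_div. rewrite Cmod_R, Rabs_pos_eq by lra. lra.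
  intros E. injection E. lra.
Qed.

Fixpoint psumn (f : nat -> R) (n : nat) : R := match n with O => 0 | S m => psumn f m + f m end.

Lemma psumn_le_Series f n : (forall k, 0 <= f k) -> ex_series f -> psumn f n <= Series f.
Proof.
  intros Hf Hex.
  assert (E : forall n, psumn f (S n) = sum_f_R0 f n).
  { induction n0; simpl in *. ring. rewrite <- IHn0. simpl. ring. }
  destruct n as [|n]. simpl. apply Series_nonneg; auto.
  rewrite E. rewrite (Series_incr_n f (S n)) by (auto; lia). simpl pred.
  pose proof (Series_nonneg (fun k => f (S n + k)%nat) (fun k => Hf _)
     (proj1 (ex_series_incr_n f (S n)) Hex)). lra.
Qed.

Section Prod.
Variable b : nat -> R.
Hypothesis hb_pos : forall j, 0 < b j.
Hypothesis hb_sum : ex_series (fun j => / b j).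

Lemma D0_nonneg t : 0 <= D 0 t.
Proof. simpl. destruct (ln1p_le (exp t) (exp_pos t)). lra. Qed.

Lemma prod_bound z n : 0 < Cmod z ->
  Cmod (prod_part b z n) <= exp (psumn (fun j => D 0 (ln (Cmod z) - a b j)) n).
Proof.
  intros Hz. induction n as [|n IH]; simpl prod_part; simpl psumn.
  - rewrite Cmod_1, exp_0. lra.
  - rewrite Cmod_mult. rewrite exp_plus.
    assert (E : exp (ln (1 + exp (ln (Cmod z) - a b n))) = 1 + Cmod z / b n).
    { simpl. rewrite exp_sub_a by auto. rewrite (exp_ln (Cmod z)) by auto. rewrite exp_ln. reflexivity.
      pose proof (hb_pos n). assert (0 < Cmod z * / b n) by (apply Rmult_lt_0_compat; auto; apply Rinv_0_lt_compat; auto). lra. }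
    rewrite E. apply Rmult_le_compat. apply Cmod_ge_0. apply Cmod_ge_0. exact IH.
    apply Cmod_factor; auto.
Qed.

Lemma exp_mono x y : x <= y -> exp x <= exp y.
Proof. intros H. destruct (Rle_lt_or_eq_dec _ _ H). left; apply exp_increasing; auto. subst; lra. Qed.

Lemma im_le_Cmod' (c : C) : Rabs (Im c) <= Cmod c.
Proof.
  unfold Cmod, Im. rewrite <- sqrt_Rsqr_abs. apply sqrt_le_1_alt. unfold Rsqr. simpl. nra.
Qed.

Lemma inf_prod_bound z : 0 < Cmod z -> Cmod (inf_prod b z) <= 2 * exp (G b 0 (ln (Cmod z))).
Proof.
  intros Hz.
  assert (Hn : forall n, Cmod (prod_part b z n) <= exp (G b 0 (ln (Cmod z)))).
  { intros n. eapply Rle_trans. apply prod_bound; auto. apply exp_mono.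
    apply psumn_le_Series. intros; apply D0_nonneg. apply ex_G; auto. }
  eapply Rle_trans. apply Cmod_le_sum. unfold inf_prod. simpl.
  assert (H1 : Rabs (real (Lim_seq (fun n => Re (prod_part b z n)))) <= exp (G b 0 (ln (Cmod z)))).
  { apply Lim_seq_abs_bound. intros n. eapply Rle_trans. apply re_le_Cmod. apply Hn. }
  assert (H2 : Rabs (real (Lim_seq (fun n => Im (prod_part b z n)))) <= exp (G b 0 (ln (Cmod z)))).
  { apply Lim_seq_abs_bound. intros n. eapply Rle_trans. apply im_le_Cmod'. apply Hn. }
  lra.
Qed.

Lemma max_modulus_bound r : 0 < r -> max_modulus (inf_prod b) r <= 2 * exp (G b 0 (ln r)).
Proof.
  intros Hr. unfold max_modulus.
  pose proof (Lub_Rbar_correct (fun y => exists z : C, Cmod z = r /\ y = Cmod (inf_prod b z))) as [Hub Hl].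
  assert (H : Rbar_le (Lub_Rbar (fun y => exists z : C, Cmod z = r /\ y = Cmod (inf_prod b z))) (2 * exp (G b 0 (ln r)))).
  { apply Hl. intros y [z [Hz Hy]]. subst y. simpl. rewrite <- Hz. apply inf_prod_bound. lra. }
  assert (Hp : 0 < 2 * exp (G b 0 (ln r))) by (pose proof (exp_pos (G b 0 (ln r))); lra).
  destruct (Lub_Rbar _) as [l| |]; simpl in *; try contradiction; lra.
Qed.
End Prod.

Lemma ln_nonpos x : x <= 0 -> ln x = 0.
Proof. intros H. unfold ln. destruct (Rlt_dec 0 x); [exfalso; lra|reflexivity]. Qed.

Lemma ln_le_x x : 0 < x -> ln x <= x - 1.
Proof. intros H. pose proof (exp_ineq1_le (ln x)). rewrite exp_ln in H0; lra. Qed.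

Lemma ln_le_sqrt y : 0 < y -> ln y <= 2 * sqrt y.
Proof.
  intros H. pose proof (sqrt_lt_R0 y H).
  replace (ln y) with (2 * ln (sqrt y)).
  pose proof (ln_le_x (sqrt y) H0). lra.
  rewrite <- (sqrt_sqrt y) at 2 by lra. rewrite ln_mult by lra. ring.
Qed.

Lemma ln2_bounds : 0 < ln 2 < 1.
Proof. split. rewrite <- ln_1. apply ln_increasing; lra.
  rewrite <- (ln_exp 1). apply ln_increasing. lra. pose proof (exp_ineq1 1 ltac:(lra)). lra. Qed.

Lemma final_ineq d L S1 v :
  0 < d -> 1 + (4 + Rabs L + d * (1 + Rabs S1)) / d <= v ->
  L + 4 * v <= d * (v * v - 1 + S1).
Proof.
  intros Hd Hv. set (W := (4 + Rabs L + d * (1 + Rabs S1)) / d) in *.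
  assert (HW : d * W = 4 + Rabs L + d * (1 + Rabs S1)) by (unfold W; field; lra).
  pose proof (Rabs_pos L). pose proof (Rabs_pos S1).
  assert (0 <= W). { unfold W. apply Rmult_le_pos. nra. left; apply Rinv_0_lt_compat; lra. }
  assert (Hv1 : 1 <= v) by lra.
  assert (E1 : d * v * v >= d * (1 + W) * v).
  { apply Rle_ge. rewrite (Rmult_assoc d v v), (Rmult_assoc d (1+W) v). apply Rmult_le_compat_l. lra.
    apply Rmult_le_compat_r; lra. }
  assert (E2 : (Rabs L + d * (1 + Rabs S1)) * v >= Rabs L + d * (1 + Rabs S1)).
  { apply Rle_ge. rewrite <- (Rmult_1_r (Rabs L + d * (1 + Rabs S1))) at 1. apply Rmult_le_compat_l. nra. lra. }
  assert (E3 : d * (1 + W) * v = d * v + 4 * v + (Rabs L + d * (1 + Rabs S1)) * v).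
  { replace (d * (1 + W) * v) with (d * v + (d * W) * v) by ring. rewrite HW. ring. }
  pose proof (Rle_abs L). pose proof (Rle_abs (- S1)). rewrite Rabs_Ropp in *.
  assert (0 <= d * v) by nra. nra.
Qed.

Section Growth.
Variable b : nat -> R.
Hypothesis hb_pos : forall j, 0 < b j.
Hypothesis hb_sum : ex_series (fun j => / b j).

Lemma MVT_step (f df : R -> R) x y : x <= y -> (forall t, is_derive f t (df t)) ->
  exists c, x <= c <= y /\ f y - f x = df c * (y - x).
Proof.
  intros Hxy Hd.
  destruct (MVT_gen f x y df) as [c [Hc E]].
  - intros; apply Hd.
  - intros t _. apply continuity_pt_filterlim. apply (ex_derive_continuous (K:=R_AbsRing) (V:=R_NormedModule)).
    eexists; apply Hd.
  - rewrite Rmin_left, Rmax_right in Hc by lra. exists c; split; auto.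
Qed.

Lemma G_quad T S0 : (forall s, S0 < s -> G b 2 s <= T) ->
  forall s, S0 + 1 <= s ->
  G b 0 s <= G b 0 (S0 + 1) + Rabs (G b 1 (S0 + 1)) * (s - (S0 + 1)) + T * (s - (S0 + 1)) ^ 2.
Proof.
  intros H s Hs. set (S1 := S0 + 1) in *.
  assert (HT : 0 <= T). { assert (HS : S0 < S1) by (unfold S1; lra). pose proof (H S1 HS).
    assert (0 <= G b 2 S1). { apply Series_nonneg. intros; left; apply D2_pos. apply ex_G; auto. } lra. }
  assert (H1 : forall x, S1 <= x -> G b 1 x <= G b 1 S1 + T * (x - S1)).
  { intros x Hx. destruct (MVT_step (G b 1) (G b 2) S1 x Hx) as [c [Hc E]].
    intros; apply G_derive; auto.
    pose proof (H c ltac:(unfold S1 in *; lra)). nra. }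
  destruct (MVT_step (G b 0) (G b 1) S1 s Hs) as [c [Hc E]].
  intros; apply G_derive; auto.
  pose proof (H1 c ltac:(lra)). pose proof (Rle_abs (G b 1 S1)).
  assert (G b 1 c <= Rabs (G b 1 S1) + T * (s - S1)) by nra.
  nra.
Qed.
End Growth.

Lemma G2_unbounded (b : nat -> R) (rho : R)
  (hb_pos : forall j, 0 < b j)
  (hb_sum : ex_series (fun j => / b j))
  (hrho : 0 < rho)
  (horder : order_eq (inf_prod b) rho) :
  forall T S0, exists s, S0 < s /\ T < G b 2 s.
Proof.
  intros T S0. destruct (classic (exists s, S0 < s /\ T < G b 2 s)) as [H|H]; auto. exfalso.
  assert (HT : forall s, S0 < s -> G b 2 s <= T).
  { intros s Hs. apply Rnot_lt_le. intro. apply H. eauto. }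
  set (S1 := S0 + 1).
  set (A0 := G b 0 S1). set (A1 := Rabs (G b 1 S1)).
  set (Kc := 2 + Rabs A0 + A1 + Rabs T).
  assert (HA1 : 0 <= A1) by apply Rabs_pos.
  assert (HKc : 2 <= Kc). { unfold Kc. pose proof (Rabs_pos A0). pose proof (Rabs_pos T). lra. }
  set (d := rho / 2). assert (Hd : 0 < d) by (unfold d; lra).
  set (L := ln Kc).
  set (V := 1 + (4 + Rabs L + d * (1 + Rabs S1)) / d).
  assert (HV : 1 <= V).
  { unfold V. assert (0 <= (4 + Rabs L + d * (1 + Rabs S1)) / d); [|lra].
    apply Rmult_le_pos. pose proof (Rabs_pos L); pose proof (Rabs_pos S1). nra. left; apply Rinv_0_lt_compat; lra. }
  set (Sstar := Rabs S1 + V * V + 1).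
  destruct horder as [_ Hord].
  destruct (Hord d Hd (exp Sstar)) as [r [Hr Hg]].
  pose proof (exp_pos Sstar) as HeS.
  assert (Hr0 : 0 < r) by lra.
  set (s := ln r).
  assert (Hs : Sstar < s). { unfold s. rewrite <- (ln_exp Sstar). apply ln_increasing; auto. }
  assert (HS1s : S1 <= s). { pose proof (Rle_abs S1). unfold Sstar in Hs. nra. }
  assert (Hs0 : 0 < s). { pose proof (Rabs_pos S1). unfold Sstar in Hs. nra. }
  set (M := max_modulus (inf_prod b) r) in *.
  assert (Hlow : d * s < ln (ln M)).
  { replace (rho - d) with d in Hg by (unfold d; field).
    fold s in Hg. apply (Rmult_lt_compat_r s) in Hg; auto.
    unfold Rdiv in Hg. rewrite Rmult_assoc, Rinv_l in Hg; lra. }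
  set (u := s - S1).
  assert (Hu : 0 <= u) by (unfold u; lra).
  assert (HF : G b 0 s <= A0 + A1 * u + T * u ^ 2).
  { apply (G_quad b hb_pos hb_sum T S0 HT s HS1s). }
  assert (HF0 : 0 <= G b 0 s). { apply Series_nonneg. intros; apply D0_nonneg. apply ex_G; auto. }
  assert (HM : M <= 2 * exp (G b 0 s)). { unfold M, s. apply max_modulus_bound; auto. }
  set (U := ln 2 + G b 0 s).
  pose proof ln2_bounds as Hl2.
  assert (HU : 0 < U) by (unfold U; lra).
  assert (HlnM : ln M <= U).
  { destruct (Rle_lt_dec M 0) as [Hm|Hm]. rewrite ln_nonpos; auto; lra.
    unfold U. rewrite <- (ln_exp (G b 0 s)), <- ln_mult by (lra || apply exp_pos).
    apply ln_le; auto. }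
  assert (Hll : ln (ln M) <= ln (1 + U)).
  { destruct (Rle_lt_dec (ln M) 0) as [Hm|Hm]. rewrite ln_nonpos; auto.
    rewrite <- ln_1. apply ln_le; lra. apply ln_le; auto; lra. }
  assert (H1U : 1 + U <= Kc * (1 + u) ^ 2).
  { unfold U, Kc. pose proof (Rle_abs A0). pose proof (Rle_abs T). pose proof (Rabs_pos A0). pose proof (Rabs_pos T).
    assert (T * u ^ 2 <= Rabs T * u ^ 2) by (apply Rmult_le_compat_r; nra).
    assert (A1 * u <= A1 * (1 + u) ^ 2) by (apply Rmult_le_compat_l; nra).
    assert (Rabs T * u ^ 2 <= Rabs T * (1 + u) ^ 2) by (apply Rmult_le_compat_l; nra).
    assert (2 + Rabs A0 <= (2 + Rabs A0) * (1 + u) ^ 2) by nra.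
    nra. }
  assert (Hln1 : ln (1 + U) <= L + 2 * ln (1 + u)).
  { eapply Rle_trans. apply ln_le. lra. exact H1U.
    unfold L. rewrite ln_mult by (lra || (apply pow_lt; lra)). simpl.
    rewrite Rmult_1_r, ln_mult by lra. lra. }
  set (v := sqrt (1 + u)).
  assert (Hvv : v * v = 1 + u) by (unfold v; apply sqrt_sqrt; lra).
  assert (Hv : V <= v).
  { unfold v. rewrite <- (sqrt_square V) by lra. apply sqrt_le_1_alt.
    unfold u. unfold Sstar in Hs. pose proof (Rle_abs S1). lra. }
  assert (Hln2 : ln (1 + u) <= 2 * v) by (apply ln_le_sqrt; lra).
  pose proof (final_ineq d L S1 v Hd Hv) as Hfin.
  assert (Hsv : v * v - 1 + S1 = s) by (rewrite Hvv; unfold u; ring).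
  rewrite Hsv in Hfin. lra.
Qed.

Theorem proposition4p7 (b : nat -> R) (rho : R)
  (hb_pos : forall j, 0 < b j)
  (hb_incr : forall i j, (i <= j)%nat -> b i <= b j)
  (hb_sum : ex_series (fun j => / b j))
  (hrho : 0 < rho < 1)
  (horder : order_eq (inf_prod b) rho) :
  let F := fun s : R => Series (fun j => ln (1 + exp s / b j)) in
  forall k : nat, (3 <= k)%nat ->
    liminf_pinfty_eq
      (fun s => Rabs (Derive_n F k s) / Rpower (Derive_n F 2 s) (INR k / 2)) 0.
Proof.
  intros F k Hk.
  assert (EF : forall m s, Derive_n F m s = G b m s) by (intros; apply Derive_n_G; auto).
  split.
  - intros eps He. exists 0. intros s _.
    assert (0 <= Rabs (Derive_n F k s) / Rpower (Derive_n F 2 s) (INR k / 2)).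
    { apply Rmult_le_pos. apply Rabs_pos. left; apply Rinv_0_lt_compat. unfold Rpower; apply exp_pos. }
    lra.
  - intros eps He S0.
    destruct k as [|[|[|m]]]; try lia.
    set (C := psum (qq (S m))).
    assert (HC : 0 <= C) by apply psum_pos.
    destruct (G2_unbounded b rho hb_pos hb_sum (proj1 hrho) horder (1 + (C / eps) ^ 2) S0) as [s [Hs HT]].
    exists s. split; auto. rewrite !EF.
    set (x := G b 2 s) in *.
    assert (Hce : 0 <= C / eps) by (apply Rmult_le_pos; auto; left; apply Rinv_0_lt_compat; auto).
    assert (Hx1 : 1 <= x) by nra.
    assert (Hsq : C / eps < sqrt x).
    { rewrite <- (sqrt_pow2 (C / eps)) by auto. apply sqrt_lt_1_alt. split. nra. lra. }
    set (P := Rpower x (INR (S (S (S m))) / 2)).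
    assert (HP : x * sqrt x <= P).
    { unfold P. rewrite <- Rpower_sqrt by lra. rewrite <- (Rpower_1 x) at 1 by lra.
      rewrite <- Rpower_plus. apply Rle_Rpower; auto.
      rewrite S_INR, S_INR, S_INR. pose proof (pos_INR m). lra. }
    assert (HG : Rabs (G b (S (S (S m))) s) <= C * x) by (apply G_high_bound; auto).
    assert (Hsqx : 0 < sqrt x) by (apply sqrt_lt_R0; lra).
    assert (H1 : C < eps * sqrt x).
    { apply (Rmult_lt_compat_l eps) in Hsq; auto. unfold Rdiv in Hsq.
      rewrite <- Rmult_assoc, (Rmult_comm eps C), Rmult_assoc, Rinv_r in Hsq; lra. }
    assert (H2 : C * x < eps * (x * sqrt x)).
    { replace (eps * (x * sqrt x)) with ((eps * sqrt x) * x) by ring. apply Rmult_lt_compat_r; lra. }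
    assert (HP0 : 0 < P) by (unfold P, Rpower; apply exp_pos).
    assert (Rabs (G b (S (S (S m))) s) < eps * P).
    { assert (eps * (x * sqrt x) <= eps * P) by (apply Rmult_le_compat_l; lra). lra. }
    replace (0 + eps) with eps by ring.
    apply (Rmult_lt_reg_r P); auto. unfold Rdiv. rewrite Rmult_assoc, Rinv_l by lra. lra.
Qed.
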